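(* Let $q$ be a power of a prime $p$ and let $L\subseteq[q-1]$. Let $\mathcal{F}\subseteq 2^{[n]}$ be $q$-modular $L$-differencing Sperner. Suppose $g\in\mathbb{Z}[y]$ is a polynomial of degree $d$ such that $v_p(g(0))<v_p(g(u))$ for every $u\in L+q\mathbb{Z}$. Then $$|\mathcal{F}|\le\sum_{i=0}^{d}\binom{n}{i}.$$ If in addition either $v_p(g(0))\le v_p(g(u-1))$ for every $u\in L+q\mathbb{Z}$, or $v_p(g(0))\le v_p(g(u+1))$ for every $u\in L+q\mathbb{Z}$, then $$|\mathcal{F}|\le\sum_{i=0}^{d}\binom{n-1}{i}.$$
   Context: $[n]=\{1,\ldots,n\}$, $2^{[n]}$ is the family of all subsets of $[n]$, $L+q\mathbb{Z}=\{\ell+qt:\ell\in L,t\in\mathbb{Z}\}$. For a prime $p$ and integer $m$, $v_p(m)$ is the largest $k\ge0$ with $p^k\mid m$, and $v_p(0)=+\infty$. For $L\subseteq[q-1]$, $\mathcal{F}$ is $q$-modular $L$-differencing Sperner if for all distinct $A,B\in\mathcal{F}$, $|A\setminus B|\equiv\ell\pmod q$ for some $\ell\in L$. *)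

(* Defs.v *)
From HB Require Import structures.
From mathcomp Require Import all_boot all_order all_algebra.
Set Implicit Arguments. Unset Strict Implicit. Unset Printing Implicit Defensive.
Import Order.TTheory GRing.Theory Num.Theory.

(* p-adic valuation of an integer, with v_p(0) = +oo encoded as None. *)
Definition vp (p : nat) (m : int) : option nat :=
  if m == 0 then None else Some (logn p `|m|%N).

Definition ole (a b : option nat) : bool :=
  match a, b with
  | _, None => true
  | None, Some _ => false
  | Some x, Some y => (x <= y)%N
  end.
Definition olt (a b : option nat) : bool :=
  match a, b with
  | None, _ => false
  | Some _, None => true
  | Some x, Some y => (x < y)%N
  end.

Definition in_LqZ (L : seq nat) (q : nat) (u : int) : Prop :=
  exists l t, l \in L /\ u = (l%:Z + (q%:Z) * t)%R.

Definition differencing_sperner (n q : nat) (L : seq nat)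
  (F : {set {set 'I_n}}) : Prop :=
  forall A B, A \in F -> B \in F -> A != B ->
    exists2 l, l \in L & #|A :\: B| = l %[mod q].

(* Main.v *)
Require Import Defs.
From mathcomp Require Import all_boot all_order all_algebra.
Set Implicit Arguments. Unset Strict Implicit. Unset Printing Implicit Defensive.
Import Order.TTheory GRing.Theory Num.Theory.
Section Space.
Local Open Scope ring_scope.
Variable m : nat.
Notation V := {ffun {set 'I_m} -> rat^o}.
Definition mono (S : {set 'I_m}) : V := [ffun X : {set 'I_m} => (S \subset X)%:R].
Definition Es j : seq V := [seq mono Y | Y <- enum [set Y : {set 'I_m} | (#|Y| <= j)%N]].
Definition W j := <<Es j>>%VS.
Definition pmul (a b : V) : V := [ffun X => a X * b X].

Lemma ffunZ' (c : rat) (f : V) X : (c *: f) X = c * f X.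
Proof. by rewrite ffunE. Qed.

Lemma mono_in j (S : {set 'I_m}) : (#|S| <= j)%N -> mono S \in W j.
Proof. by move=> hS; apply: memv_span; apply: map_f; rewrite mem_enum inE. Qed.

Lemma WS j j' : (j <= j')%N -> (W j <= W j')%VS.
Proof.
move=> hj; apply: sub_span => x /mapP [S]; rewrite mem_enum inE => hS ->.
by apply: map_f; rewrite mem_enum inE (leq_trans hS hj).
Qed.

Lemma pmul_mono1 (i : 'I_m) (u : V) j : u \in W j -> pmul (mono [set i]) u \in W j.+1.
Proof.
move=> hu.
have := coord_span (X := in_tuple (Es j)) hu => ->.
have -> : pmul (mono [set i]) (\sum_k coord (in_tuple (Es j)) k u *: (in_tuple (Es j))`_k)
  = \sum_k coord (in_tuple (Es j)) k u *: pmul (mono [set i]) (in_tuple (Es j))`_k.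
  apply/ffunP => X; rewrite !ffunE !sum_ffunE mulr_sumr; apply: eq_bigr => k _.
  by rewrite !ffunE mulrCA.
apply: rpred_sum => k _; apply: rpredZ.
have : (in_tuple (Es j))`_k \in Es j by apply: mem_nth; exact: ltn_ord.
case/mapP => S; rewrite mem_enum inE => hS ->.
have -> : pmul (mono [set i]) (mono S) = mono (i |: S).
  apply/ffunP => X; rewrite !ffunE subUset sub1set.
  by case: (i \in X); case: (S \subset X); rewrite /= ?mul1r ?mul0r.
by apply: mono_in; rewrite cardsU1; case: (i \in S); rewrite /= ?ltnS // ltnW.
Qed.

Definition lin (T : pred 'I_m) (b : bool) : V :=
  [ffun X : {set 'I_m} => ((\sum_(i | T i) ((i \in X) == b))%N)%:R].

Lemma pmul_lin (T : pred 'I_m) b (u : V) j : u \in W j -> pmul (lin T b) u \in W j.+1.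
Proof.
move=> hu.
have -> : pmul (lin T b) u = \sum_(i | T i)
   (if b then pmul (mono [set i]) u else u - pmul (mono [set i]) u).
  apply/ffunP => X; rewrite !ffunE natr_sum mulr_suml sum_ffunE.
  apply: eq_bigr => i _; case: b; rewrite ?ffunE sub1set.
    by rewrite eqb_id.
  rewrite eqbF_neg; case: (i \in X); rewrite /= ?mul1r ?mul0r ?subrr ?subr0 //.
by apply: rpred_sum => i _; case: b; rewrite ?pmul_mono1 //;
  apply: rpredB; [apply: (subvP (WS (leqnSn j))) | apply: pmul_mono1].
Qed.

Lemma pow_in (T : pred 'I_m) b j : [ffun X => lin T b X ^+ j] \in W j.
Proof.
elim: j => [|j IH].
  have -> : [ffun X => lin T b X ^+ 0] = mono set0.
    by apply/ffunP => X; rewrite !ffunE sub0set expr0.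
  by apply: mono_in; rewrite cards0.
have -> : [ffun X => lin T b X ^+ j.+1] = pmul (lin T b) [ffun X => lin T b X ^+ j].
  by apply/ffunP => X; rewrite !ffunE exprS.
exact: pmul_lin.
Qed.

Lemma poly_in (T : pred 'I_m) (b : bool) (g : {poly int}) d : size g = d.+1 ->
  [ffun X : {set 'I_m} => (g.[(\sum_(i | T i) ((i \in X) == b))%N%:Z])%:~R] \in W d.
Proof.
move=> hs.
have -> : [ffun X : {set 'I_m} => (g.[(\sum_(i | T i) ((i \in X) == b))%N%:Z])%:~R] =
   \sum_(k < size g) (g`_k)%:~R *: [ffun X => lin T b X ^+ k] :> V.
  apply/ffunP => X; rewrite ffunE sum_ffunE horner_coef rmorph_sum /=.
  apply: eq_bigr => k _; rewrite !ffunE rmorphM rmorphXn /= pmulrn. by [].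
apply: rpred_sum => k _; apply: rpredZ.
apply: (subvP (WS _)) (pow_in T b k); by rewrite -ltnS -hs.
Qed.

Lemma cdr i : 'C(m, i) = #|[set Y : {set 'I_m} | #|Y| == i]|.
Proof. by rewrite card_draws card_ord. Qed.

Lemma count_sets d : #|[set S : {set 'I_m} | (#|S| <= d)%N]| = (\sum_(0 <= i < d.+1) 'C(m, i))%N.
Proof.
elim: d => [|d IH].
  rewrite big_nat1 cdr; apply: eq_card => S; by rewrite !inE leqn0.
rewrite big_nat_recr //= -IH cdr -!sum1dep_card.
rewrite (bigID (fun S : {set 'I_m} => (#|S| <= d)%N)) /=; congr (_ + _)%N.
  by apply: eq_bigl => S; apply/idP/idP => [/andP[]//|h]; rewrite h (leq_trans h).
by apply: eq_bigl => S; rewrite -ltnNge andbC -eqn_leq.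
Qed.

End Space.
Section Desc.
Local Open Scope ring_scope.

Lemma le_abs_sum N (K : 'I_N -> int) i : (`|K i| <= \sum_j `|K j|)%N.
Proof. by rewrite (bigD1 i) //= leq_addr. Qed.

Lemma descZ (p e N : nat) (M : 'I_N -> 'I_N -> int) : prime p ->
  (forall i, ~~ (p ^ e.+1 %| `|M i i|)%N) ->
  (forall i j, i != j -> (p ^ e.+1 %| `|M i j|)%N) ->
  forall K : 'I_N -> int, (forall j, \sum_i K i * M i j = 0) -> forall i, K i = 0.
Proof.
move=> pp hd ho.
suff H : forall s (K : 'I_N -> int), (\sum_i `|K i| <= s)%N ->
   (forall j, \sum_i K i * M i j = 0) -> forall i, K i = 0.
  by move=> K; apply: (H _ K (leqnn _)).
elim=> [|s IH] K hs hK i.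
  by apply/eqP; rewrite -absz_eq0 -leqn0 (leq_trans (le_abs_sum K i) hs).
have hp : forall j, (p %| `|K j|)%N.
  move=> j.
  have hj : ((p ^ e.+1)%:Z %| K j * M j j)%Z.
    have := hK j; rewrite (bigD1 j) //= => /eqP; rewrite addr_eq0 => /eqP ->.
    rewrite rpredN; apply: rpred_sum => i0 hi0; apply: dvdz_mull.
    by rewrite dvdzE /=; apply: ho.
  have [->|Kn0] := eqVneq (K j) 0; first by rewrite dvdn0.
  have Mn0 : M j j != 0.
    by apply: contra (hd j) => /eqP ->; rewrite dvdn0.
  move: hj; rewrite dvdzE abszM /= => hj.
  have hK0 : (0 < `|K j|)%N by rewrite absz_gt0.
  have hM0 : (0 < `|M j j|)%N by rewrite absz_gt0.
  move: hj; rewrite pfactor_dvdn // ?muln_gt0 ?hK0 // lognM //.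
  move: (hd j); rewrite pfactor_dvdn // -ltnNge => hlt hle.
  rewrite -(expn1 p) pfactor_dvdn //.
  case: (logn p `|K j|) hle => [|//]; rewrite add0n => h.
  by move: (leq_ltn_trans h hlt); rewrite ltnn.
pose K' i := ((K i) %/ p%:Z)%Z.
have hKK : forall i, K i = K' i * p%:Z by move=> i0; rewrite divzK // dvdzE.
have hK' : forall j, \sum_i K' i * M i j = 0.
  move=> j; have := hK j.
  rewrite (eq_bigr (fun i => p%:Z * (K' i * M i j))); last first.
    by move=> i0 _; rewrite hKK mulrA [p%:Z * _]mulrC.
  rewrite -mulr_sumr => /eqP; rewrite mulf_eq0 => /orP [|/eqP //].
  by move=> /eqP [] hp0; move: (prime_gt1 pp); rewrite hp0.
have hsum : (\sum_i `|K i| = p * \sum_i `|K' i|)%N.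
  by rewrite big_distrr /=; apply: eq_bigr => i0 _; rewrite hKK abszM mulnC.
have hs' : (\sum_i `|K' i| <= s)%N.
  case: (posnP (\sum_i `|K' i|)) => [-> //|hpos].
  by rewrite -ltnS (leq_trans _ hs) // hsum ltn_Pmull // prime_gt1.
by rewrite hKK (IH K' hs' hK' i) mul0r.
Qed.
Lemma descQ (p e N : nat) (M : 'I_N -> 'I_N -> int) : prime p ->
  (forall i, ~~ (p ^ e.+1 %| `|M i i|)%N) ->
  (forall i j, i != j -> (p ^ e.+1 %| `|M i j|)%N) ->
  forall k : 'I_N -> rat, (forall j, \sum_i k i * (M i j)%:~R = 0) -> forall i, k i = 0.
Proof.
move=> pp hd ho k hk.
pose D : int := \prod_i denq (k i).
pose K i : int := numq (k i) * \prod_(i0 | i0 != i) denq (k i0).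
have hD : D != 0 by rewrite prodf_seq_neq0; apply/allP => i0 _; rewrite denq_neq0.
have hKq : forall i, (K i)%:~R = k i * D%:~R :> rat.
  move=> i; rewrite /K /D [X in _ = _ * X%:~R](bigD1 i) //= !intrM.
  have hkd : k i * (denq (k i))%:~R = (numq (k i))%:~R.
    by rewrite -{1}(divq_num_den (k i)) divfK // intr_eq0 denq_neq0.
  by rewrite [in RHS]mulrA hkd.
have hKz : forall j, \sum_i K i * M i j = 0.
  move=> j; apply/eqP; rewrite -(intr_eq0 rat) rmorph_sum /=.
  rewrite (eq_bigr (fun i => D%:~R * (k i * (M i j)%:~R))); last first.
    by move=> i _; rewrite intrM hKq mulrA [D%:~R * _]mulrC.
  by rewrite -mulr_sumr hk mulr0.
move=> i; have := descZ pp hd ho hKz i => /(congr1 (fun z : int => z%:~R : rat)).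
rewrite hKq /= => /eqP; rewrite mulf_eq0 intr_eq0 (negbTE hD) orbF => /eqP //.
Qed.

End Desc.

Section Main.
Local Open Scope ring_scope.
Variable m : nat.
Definition wd (i : 'I_m) : 'I_m.+1 := widen_ord (leqnSn m) i.
Definition Tset (A : {set 'I_m.+1}) : pred 'I_m := fun i => (wd i \in A) != (ord_max \in A).
Definition pt (B : {set 'I_m.+1}) : {set 'I_m} := [set i | wd i \in B].
Definition ell (A : {set 'I_m.+1}) (X : {set 'I_m}) : nat :=
  (\sum_(i | Tset A i) ((i \in X) == (ord_max \in A)))%N.

Lemma card_sumE (C : {set 'I_m.+1}) :
  #|C| = (\sum_(i < m) (wd i \in C) + (ord_max \in C))%N.
Proof. by rewrite -sum1_card big_mkcond big_ord_recr. Qed.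

Lemma ell_pt A B : ell A (pt B) = if ord_max \in A then #|B :\: A| else #|A :\: B|.
Proof.
rewrite /ell big_mkcond /=.
case hA: (ord_max \in A); rewrite card_sumE !inE hA /= ?andbF addn0;
  apply: eq_bigr => i _; rewrite /Tset hA !inE;
  by case: (wd i \in A); case: (wd i \in B).
Qed.

Lemma main_bound d (g : {poly int}) (F : {set {set 'I_m.+1}}) (P : int -> Prop) (p : nat) :
  prime p -> size g = d.+1 -> g.[0] != 0 ->
  (forall A B, A \in F -> B \in F -> A != B -> P (#|A :\: B|%:Z)) ->
  (forall u, P u -> olt (vp p g.[0]) (vp p g.[u])) ->
  (#|F| <= \sum_(0 <= i < d.+1) 'C(m, i))%N.
Proof.
move=> pp hs g0 hP hv.
pose f (A : {set 'I_m.+1}) : {ffun {set 'I_m} -> rat^o} :=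
  [ffun X : {set 'I_m} => (g.[(\sum_(i | Tset A i) ((i \in X) == (ord_max \in A)))%N%:Z])%:~R].
pose s := [seq f A | A <- enum F].
have hsub : {subset s <= W m d}.
  by move=> x /mapP [A _ ->]; apply: poly_in.
have hsz : size s = #|F| by rewrite size_map -cardE.
set e := logn p `|g.[0]|.
have hdiag : ~~ (p ^ e.+1 %| `|g.[0]|)%N.
  by rewrite pfactor_dvdn ?absz_gt0 // ltnn.
have hoff : forall u, P u -> (p ^ e.+1 %| `|g.[u]|)%N.
  move=> u /hv; rewrite /vp (negbTE g0) /=.
  case: eqP => [-> //|/eqP gu0] /= hlt.
  by rewrite pfactor_dvdn ?absz_gt0.
have hfree : free s.
  have : free (in_tuple s); last by [].
  apply/freeP => k hk.
  pose a (i : 'I_(size s)) := nth set0 (enum F) i.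
  have hsE : size s = size (enum F) by rewrite size_map.
  have ha : forall i : 'I_(size s), (in_tuple s)`_i = f (a i).
    by move=> i; rewrite /= (nth_map set0) // -hsE.
  have haF : forall i, a i \in F.
    by move=> i; rewrite -mem_enum mem_nth // -hsE.
  have hainj : forall i j, i != j -> a i != a j.
    move=> i j; apply: contra => /eqP; rewrite /a => h.
    have hi : (i < size (enum F))%N by rewrite -hsE ltn_ord.
    have hj : (j < size (enum F))%N by rewrite -hsE ltn_ord.
    by apply/eqP; apply: val_inj; move: h => /eqP; rewrite nth_uniq ?enum_uniq // => /eqP.
  pose M (i j : 'I_(size s)) : int := g.[(ell (a i) (pt (a j)))%:Z].
  apply: (@descQ p e _ M pp _ _ k).
  - by move=> i; rewrite /M ell_pt setDv cards0 if_same.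
  - move=> i j hij; rewrite /M ell_pt; case: ifP => _; apply: hoff; apply: hP => //.
      by rewrite eq_sym; apply: hainj.
    exact: hainj.
  - move=> j; have := congr1 (fun h : {ffun {set 'I_m} -> rat^o} => h (pt (a j))) hk.
    rewrite sum_ffunE ffunE /= => H; rewrite -[RHS]H; apply: eq_bigr => i _.
    by rewrite ffunE ha /f ffunE.
have hdim : (\dim <<s>> = size s)%N by apply/eqP.
rewrite -hsz -hdim -(count_sets m d).
apply: (leq_trans (dimvS (introT span_subvP hsub))).
by rewrite /W (leq_trans (dim_span _)) // size_map -cardE.

Qed.
End Main.

Lemma inL_lemma (p k n : nat) (L : seq nat) (F : {set {set 'I_n}}) :
  {subset L <= [pred l | (0 < l < p ^ k)%N]} ->
  differencing_sperner (p ^ k) L F ->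
  forall A B, A \in F -> B \in F -> A != B -> in_LqZ L (p ^ k) (Posz #|A :\: B|).
Proof.
move=> hL hF A B hA hB hAB.
have [l hl hmod] := hF A B hA hB hAB.
have /andP [_ hlq] : (0 < l < p ^ k)%N by have := hL l hl.
exists l, (Posz (#|A :\: B| %/ p ^ k)%N); split => //.
rewrite -PoszM -PoszD; congr Posz.
by rewrite {1}(divn_eq #|A :\: B| (p ^ k)) hmod modn_small // addnC mulnC.
Qed.

Theorem mainTheorem7 (p k n d : nat) (L : seq nat) (F : {set {set 'I_n}})
    (g : {poly int}) :
  prime p -> (0 < k)%N ->
  {subset L <= [pred l | (0 < l < p ^ k)%N]} ->
  differencing_sperner (p ^ k) L F ->
  size g = d.+1 ->
  (forall u : int, in_LqZ L (p ^ k) u -> olt (vp p g.[0%R]) (vp p g.[u])) ->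
  (#|F| <= \sum_(0 <= i < d.+1) 'C(n, i))%N /\
  ((  (forall u : int, in_LqZ L (p ^ k) u -> ole (vp p g.[0%R]) (vp p g.[(u - 1)%R]))
   \/ (forall u : int, in_LqZ L (p ^ k) u -> ole (vp p g.[0%R]) (vp p g.[(u + 1)%R]))) ->
   (#|F| <= \sum_(0 <= i < d.+1) 'C(n.-1, i))%N).
Proof.
move=> pp k0 hL hF hs hv.
have inL := inL_lemma hL hF.
have key : (#|F| <= \sum_(0 <= i < d.+1) 'C(n.-1, i))%N.
  case: (leqP #|F| 1) => [h1|h1].
    by apply: (leq_trans h1); rewrite big_ltn // bin0 leq_addr.
  have [A [B [hA hB hAB]]] := card_gt1P h1.
  have g0 : (g.[0%R] != 0)%R.
    apply/negP => /eqP hg0; have := hv _ (inL A B hA hB hAB).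
    by rewrite /vp hg0 eqxx.
  case: n F hF A B hA hB hAB inL h1 => [|m] F hF A B hA hB hAB inL h1.
    case/negP: hAB; apply/eqP/setP => x; case: x => x hx; by [].
  exact: (main_bound pp hs g0 inL hv).
split; last by move=> _.
apply: (leq_trans key); apply: leq_sum => i _.
case: n {F hF inL key} => [//|m] /=.
by case: i => [|i]; rewrite ?bin0 // binS leq_addr.
Qed.
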